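(* Consider the delay differential equation initial value problem $$\dot u(t)=f\bigl(t,u(t),u(t-\tau(t,u(t)))\bigr),\quad t\ge t_0,\qquad u(t_0+\theta)=\phi(\theta)\ \text{for } \theta\in[-\tau_{\max},0],$$ with $f$ smooth, and suppose its solution $u$ has a breaking point $\xi_j>t_0$ of order $k$. Let $\xi(h)$ be the mesh point $t_n$ of the numerical mesh (with step size $h$) nearest to $\xi_j$. Then a necessary condition for an explicit functional continuous Runge–Kutta (FCRK) method to have global order $p>k$ on this problem is that $$\xi(h)-\xi_j=\mathcal{O}\bigl(h^{p/(k+1)}\bigr).$$
   Context: A breaking point of order $k$ of the solution $u$ is a point $\xi$ at which all derivatives of $u$ up to the $k$-th exist and the $k$-th derivative is Lipschitz continuous, while the $(k+1)$-st derivative may be discontinuous there (so the Taylor expansions of $u$ from the left and from the right of $\xi$ agree up to order $k$ but may differ from order $k+1$ on). An explicit $s$-stage FCRK method with mesh $t_0<t_1<\dots$, steps $h_n=t_{n+1}-t_n$, computes a continuous approximation $u^h$ by $u^h(t_n+\theta h_n)=u^h(t_n)+h_n\sum_{i=1}^s b_i(\theta)k_{n,i}$ for $\theta\in(0,1]$, with stages $U_{n,i}=u^h(t_n)+h_n\sum_{j<i}a_{ij}k_{n,j}$ and $k_{n,i}=f\bigl(t_n+c_ih_n,U_{n,i},\eta_{n,i}(t_n+c_ih_n-\tau(t_n+c_ih_n,U_{n,i}))\bigr)$, where $\eta_{n,i}(t)$ equals $\phi$ for $t\le t_0$, $u^h(t)$ for $t\in[t_0,t_n]$, and $u^h(t_n)+h_n\sum_{j<i}a_{ij}(\theta)k_{n,j}$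 with $\theta=(t-t_n)/h_n$ for $t>t_n$. The method has global (uniform) order $p$ if $\sup_{t}\|u(t)-u^h(t)\|=\mathcal{O}(h^p)$ over the computational interval as the step size $h\to0$. *)

(* Defs.v *)
From HB Require Import structures.
From mathcomp Require Import all_boot all_order all_algebra.
From mathcomp Require Import all_classical all_reals all_analysis.
Set Implicit Arguments. Unset Strict Implicit. Unset Printing Implicit Defensive.
Import Order.TTheory GRing.Theory Num.Theory.
Import numFieldNormedType.Exports.
Local Open Scope classical_set_scope.
Local Open Scope ring_scope.

Section Defs.
Variable R : realType.

Fixpoint Cn {U W : normedModType R} (n : nat) (g : U -> W) : Prop :=
  match n with
  | 0 => continuous g
  | m.+1 => (forall x, differentiable g x) /\
            (forall v : U, Cn m (fun x => 'D_v g x))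
  end.
Definition smooth {U W : normedModType R} (g : U -> W) : Prop :=
  forall n, Cn n g.

Definition breaking_point {V : normedModType R} (u : R -> V) (xi : R) (k : nat)
  : Prop :=
  exists delta : R, 0 < delta /\
   (forall m x, (m < k)%N -> `|x - xi| < delta -> derivable (derive1n m u) x 1) /\
   (exists L : R, forall x y, `|x - xi| < delta -> `|y - xi| < delta ->
       `|derive1n k u x - derive1n k u y| <= L * `|x - y|) /\
   (forall x, `|x - xi| < delta -> x != xi -> derivable (derive1n k u) x 1) /\
   exists Jm Jp : V, Jm != Jp /\
     (derive1n k.+1 u x @[x --> xi^'-] --> Jm) /\
     (derive1n k.+1 u x @[x --> xi^'+] --> Jp).

Definition dde_solution {V : normedModType R}
  (f : R -> V -> V -> V) (tau : R -> V -> R) (taumax : R) (phi : R -> V)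
  (t0 T : R) (u : R -> V) : Prop :=
  (forall th, - taumax <= th <= 0 -> u (t0 + th) = phi th) /\
  {within `[t0, T], continuous u} /\
  (forall t, t0 < t < T ->
     derivable u t 1 /\ derive1 u t = f t (u t) (u (t - tau t (u t)))).

(* Tableau: a i j (constants, j < i), continuous extensions aext i j (theta)
   (polynomials), weights b i (theta) (polynomials), nodes c i. Indices are nats,
   only 0 <= j < i < s are used. *)
Record fcrk (s : nat) := FCRK {
  rk_a : nat -> nat -> R;
  rk_aext : nat -> nat -> {poly R};
  rk_b : nat -> {poly R};
  rk_c : nat -> R }.

Section Step.
Variables (V : normedModType R) (s : nat) (M : fcrk s).
Variables (f : R -> V -> V -> V) (tau : R -> V -> R).
(* one step from tn with step hn, given the approximation prev valid on
   (-oo, tn] (phi for t <= t0, u^h on [t0,tn]) *)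
Variables (prev : R -> V) (tn hn : R).

Definition stage_eta (i : nat) (ks : seq V) (x : R) : V :=
  if x <= tn then prev x
  else prev tn + hn *: \sum_(j < i) ((rk_aext M i j).[(x - tn) / hn] *: nth 0 ks j).

Definition stage_new (i : nat) (ks : seq V) : V :=
  let U := prev tn + hn *: \sum_(j < i) (rk_a M i j *: nth 0 ks j) in
  let td := tn + rk_c M i * hn in
  f td U (stage_eta i ks (td - tau td U)).

Fixpoint stages (m : nat) : seq V :=
  match m with
  | 0 => [::]
  | m'.+1 => let ks := stages m' in rcons ks (stage_new m' ks)
  end.

Definition step_output (x : R) : V :=
  if x <= tn then prev x
  else prev tn + hn *: \sum_(i < s) ((rk_b M i).[(x - tn) / hn] *: nth 0 (stages s) i).
End Step.

(* fcrk_sol ... mesh n : the numerical solution u^h, valid on (-oo, mesh n];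
   for x <= t0 it equals phi (x - t0). *)
Fixpoint fcrk_sol {V : normedModType R} {s} (M : fcrk s)
  (f : R -> V -> V -> V) (tau : R -> V -> R) (phi : R -> V) (t0 : R)
  (mesh : nat -> R) (n : nat) : R -> V :=
  match n with
  | 0 => fun x => phi (x - t0)
  | n'.+1 => step_output M f tau (fcrk_sol M f tau phi t0 mesh n')
               (mesh n') (mesh n'.+1 - mesh n')
  end.

Definition mesh_family (mesh : R -> nat -> R) (t0 T h0 : R) : Prop :=
  0 < h0 /\
  forall h, 0 < h <= h0 ->
    mesh h 0%N = t0 /\
    (forall n, mesh h n < mesh h n.+1) /\
    (forall n, mesh h n.+1 - mesh h n <= h) /\
    (exists N, T <= mesh h N).

Definition has_global_order {V : normedModType R} {s} (M : fcrk s)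
  (f : R -> V -> V -> V) (tau : R -> V -> R) (phi : R -> V) (t0 T : R)
  (mesh : R -> nat -> R) (u : R -> V) (p : nat) : Prop :=
  exists C h1 : R, 0 < h1 /\ forall h, 0 < h <= h1 ->
    forall n x, t0 <= x <= T -> x <= mesh h n ->
      `|u x - fcrk_sol M f tau phi t0 (mesh h) n x| <= C * h ^+ p.

End Defs.

(* Main.v *)
Require Import Defs.
From HB Require Import structures.
From mathcomp Require Import all_boot all_order all_algebra.
From mathcomp Require Import all_classical all_reals all_analysis.
From mathcomp Require Import lra ring.
Set Implicit Arguments. Unset Strict Implicit. Unset Printing Implicit Defensive.
Import Order.TTheory GRing.Theory Num.Theory.
Import numFieldNormedType.Exports.
Local Open Scope classical_set_scope.
Local Open Scope ring_scope.

Section A.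
Variable R : realType.

Lemma coord_le_norm m n (M : 'M[R]_(m, n)) i j : `|M i j| <= `|M|.
Proof.
rewrite [leRHS]/Num.Def.normr/= mx_normrE.
apply: le_trans; last exact: (le_bigmax _ _ (i, j)).
by [].
Qed.

Lemma norm_le_coord m n (M : 'M[R]_(m, n)) K : 0 <= K ->
  (forall i j, `|M i j| <= K) -> `|M| <= K.
Proof.
move=> K0 H; rewrite [leLHS]/Num.Def.normr/= mx_normrE.
by apply: bigmax_le => // -[i j] _; apply: H.
Qed.

Lemma mvi n (H dH : R -> 'rV[R]_n) (a b K : R) : a <= b ->
  (forall t : R, a < t < b -> is_derive t (1:R) H (dH t)) ->
  {within `[a, b], continuous H} ->
  (forall t, a < t < b -> `|dH t| <= K) -> `|H b - H a| <= K * (b - a).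
Proof.
move=> ab Hd Hc HK.
case: (ltgtP a b) ab => // [altb|<-] _; last first.
  by rewrite !subrr normr0 mulr0.
have K0 : 0 <= K.
  have m : a < (a + b) / 2 < b.
    by apply/andP; split; lra.
  exact: le_trans (HK _ m).
apply: norm_le_coord; first by rewrite mulr_ge0 // subr_ge0 ltW.
move=> i j.
have hd : forall x, x \in `]a, b[%R -> is_derive x 1 (fun t => H t i j) (dH x i j).
  move=> x; rewrite in_itv /= => xab.
  have [Hdv Hdval] := Hd x xab.
  have Hdv' := (derivable_mxP H x 1).1 Hdv i j.
  apply: DeriveDef => //.
  by rewrite -Hdval derive_mx // mxE.
have hc : {within `[a, b], continuous (fun t => H t i j)}.
  move=> x; have := continuous_comp (Hc x) (@coord_continuous R 1 n i j (H x)).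
  exact.
rewrite !mxE.
have [c cab ->] := MVT altb hd hc.
rewrite normrM (gtr0_norm (x := b - a)); last by rewrite subr_gt0.
apply: ler_wpM2r; first by rewrite subr_ge0 ltW.
apply: (le_trans (coord_le_norm (dH c) i j)).
by apply: HK; move: cab; rewrite in_itv.
Qed.


Lemma is_deriveZv (V : normedModType R) (c : R -> R) (v : V) (x dc : R) :
  is_derive x (1:R) c dc -> is_derive x (1:R) (fun s => c s *: v) (dc *: v).
Proof.
move=> [Hd Hv].
have H1 : (fun h : R => h^-1 *: ((c \o shift x) (h *: 1) - c x)) @ 0^' --> dc.
  by rewrite -Hv; exact: Hd.
have H2 : (fun h : R => h^-1 *: (((fun s => c s *: v) \o shift x) (h *: 1) - c x *: v)) @ 0^' --> dc *: v.
  have -> : (fun h : R => h^-1 *: (((fun s => c s *: v) \o shift x) (h *: 1) - c x *: v)) = (fun k => k *: v) \o (fun h : R => h^-1 *: ((c \o shift x) (h *: 1) - c x)).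
    by apply/funext => h /=; rewrite -scalerBl scalerA.
  apply: cvg_comp H1 _.
  exact: scalel_continuous.
apply: DeriveDef; [exact: cvgP H2 | exact: cvg_lim H2].
Qed.
Lemma is_derive_mon (xi t : R) i :
  is_derive t (1:R) (fun s : R => (s - xi) ^+ i.+1 / (i.+1)`!%:R)
    ((t - xi) ^+ i / i`!%:R).
Proof.
have E : (fun s : R => (s - xi) ^+ i.+1 / (i.+1)`!%:R) =
   ((i.+1)`!%:R^-1 : R) \*: (shift (- xi) : R -> R) ^+ i.+1.
  apply/funext => s /=. by rewrite exprfctE /= mulrC.
rewrite E.
have H1 := @is_derive_shift R t 1 (- xi).
have H2 := is_deriveX (i.+1) H1.
have H3 := is_deriveZ ((i.+1)`!%:R^-1 : R) H2.
apply: is_derive_eq H3 _.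
rewrite /= factS natrM invfM scaler1.
rewrite /GRing.scale /=.
have nz : (i.+1%:R : R) != 0 by rewrite pnatr_eq0.
field.
rewrite pnatr_eq0 -lt0n fact_gt0 /=. by rewrite -natr1 addrC in nz.
Qed.

Definition tay n (xi : R) (F : nat -> R -> 'rV[R]_n) m (x : R) :=
  \sum_(i < m) ((x - xi) ^+ i / i`!%:R) *: F i xi.

Lemma taylor n (F : nat -> R -> 'rV[R]_n) (J : 'rV[R]_n) (xi a b eps : R) m :
  a <= b -> (xi = a \/ xi = b) ->
  (forall j t, (j < m)%N -> a < t < b -> is_derive t (1:R) (F j) (F j.+1 t)) ->
  (forall j, (j < m)%N -> {within `[a, b], continuous (F j)}) ->
  (forall t, a < t < b -> `|F m t - J| <= eps) ->
  forall x, a < x < b ->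
  `|F 0%N x - tay xi F m x - ((x - xi) ^+ m / m`!%:R) *: J| <= eps * `|x - xi| ^+ m.
Proof.
elim: m F => [|m IH] F ab xiab Hd Hc Hb x xab.
  by rewrite /tay big_ord0 subr0 expr0 fact0 divr1 scale1r expr0 mulr1; apply: Hb.
have IH' := IH (fun j => F j.+1) ab xiab
  (fun j t jm tab => Hd j.+1 t jm tab) (fun j jm => Hc j.+1 jm) Hb.
pose H t := F 0%N t - (F 0%N xi + \sum_(i < m) ((t - xi) ^+ i.+1 / (i.+1)`!%:R) *: F i.+1 xi)
   - ((t - xi) ^+ m.+1 / (m.+1)`!%:R) *: J.
pose dH t := F 1%N t - tay xi (fun j => F j.+1) m t - ((t - xi) ^+ m / m`!%:R) *: J.
have HE t : F 0%N t - tay xi F m.+1 t - ((t - xi) ^+ m.+1 / (m.+1)`!%:R) *: J = H t.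
  by rewrite /H /tay big_ord_recl expr0 fact0 divr1 scale1r.
have DP t : is_derive t (1:R)
     (fun s => F 0%N xi + \sum_(i < m) ((s - xi) ^+ i.+1 / (i.+1)`!%:R) *: F i.+1 xi)
     (0 + \sum_(i < m) ((t - xi) ^+ i / i`!%:R) *: F i.+1 xi).
    apply: is_deriveD.
    have := @is_derive_sum _ _ _ m (fun i s => ((s - xi) ^+ i.+1 / (i.+1)`!%:R) *: F i.+1 xi) t 1
      (fun i => ((t - xi) ^+ i / i`!%:R) *: F i.+1 xi)
      (fun i => is_deriveZv (F i.+1 xi) (is_derive_mon xi t i)).
    by rewrite fct_sumE.
have DQ t := is_deriveZv J (is_derive_mon xi t m).
have Hder t : a < t < b -> is_derive t (1:R) H (dH t).
  move=> tab.
  have D0 := Hd 0%N t (ltn0Sn m) tab.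
  have Ds := DP t.
  have DJ := DQ t.
  have := is_deriveB (is_deriveB D0 Ds) DJ.
  by rewrite add0r.
have H0 : H xi = 0.
  rewrite /H (subrr xi) expr0n mul0r scale0r subr0 big1 ?addr0 ?subrr // => i _.
  by rewrite expr0n mul0r scale0r.
have eps0 : 0 <= eps.
  exact: le_trans (Hb x xab).
have cG : continuous (fun s => (F 0%N xi + \sum_(i < m) ((s - xi) ^+ i.+1 / (i.+1)`!%:R) *: F i.+1 xi)
   + ((s - xi) ^+ m.+1 / (m.+1)`!%:R) *: J).
  move=> s; apply: differentiable_continuous; apply/derivable1_diffP.
  have hh := @ex_derive _ _ _ _ _ _ _ (is_deriveD (DP s) (DQ s)). exact hh.
have cH c d : a <= c -> d <= b -> {within `[c, d], continuous H}.
  move=> ac db.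
  have cF : {within `[c, d], continuous (F 0%N)}.
    apply: continuous_subspaceW (Hc 0%N (ltn0Sn m)).
    by apply: subset_itv; rewrite bnd_simp.
  have -> : H = (fun s => F 0%N s - ((F 0%N xi + \sum_(i < m) ((s - xi) ^+ i.+1 / (i.+1)`!%:R) *: F i.+1 xi)
   + ((s - xi) ^+ m.+1 / (m.+1)`!%:R) *: J)).
    by apply/funext => s; rewrite /H -addrA -opprD.
  move=> y; have hh := continuousB (cF y) (@continuous_subspaceT _ _ `[c, d] _ cG y). exact hh.
have Hmono t : a < t < b -> (`|t - xi| <= `|x - xi|) -> `|dH t| <= eps * `|x - xi| ^+ m.
  move=> tab tx; apply: le_trans (IH' t tab) _.
  apply: ler_wpM2l => //; apply: lerXn2r => //; by rewrite nnegrE.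
rewrite HE.
move/andP: xab => [ax xb].
case: xiab => Exi.
  have hh : `|H x - H a| <= eps * `|x - xi| ^+ m * (x - a).
    apply: mvi (ltW ax) _ (cH a x (lexx a) (ltW xb)) _.
      move=> t /andP[a_t tx]; apply: Hder; by rewrite a_t (lt_trans tx xb).
    move=> t /andP[a_t tx]; apply: Hmono; first by rewrite a_t (lt_trans tx xb).
    rewrite Exi !ger0_norm ?subr_ge0 ?ltW //; lra.
  move: hh; rewrite -Exi H0 subr0 exprSr mulrA (ger0_norm (x := x - xi)) //.
  by rewrite Exi subr_ge0 ltW.
- have hh : `|H b - H x| <= eps * `|x - xi| ^+ m * (b - x).
    apply: mvi (ltW xb) _ (cH x b (ltW ax) (lexx b)) _.
      move=> t /andP[xt tb]; apply: Hder; by rewrite tb (lt_trans ax xt).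
    move=> t /andP[xt tb]; apply: Hmono; first by rewrite tb (lt_trans ax xt).
    rewrite Exi !ler0_norm ?subr_le0 ?ltW //; lra.
  move: hh; rewrite -Exi H0 sub0r normrN exprSr mulrA (ler0_norm (x := x - xi)).
    by rewrite opprB.
  by rewrite Exi subr_le0 ltW.
Qed.


Fixpoint fd (V : zmodType) (N : nat) (g : R -> V) (dl x : R) : V :=
  match N with
  | 0 => g x
  | N'.+1 => fd N' g dl (x + dl) - fd N' g dl x
  end.

Lemma node_shift (x dl : R) (i : nat) : x + dl + i%:R * dl = x + i.+1%:R * dl.
Proof. rewrite -addn1 natrD mulrDl mul1r; ring. Qed.

Lemma fd_ext (V : zmodType) N (g1 g2 : R -> V) dl x :
  (forall i, (i <= N)%N -> g1 (x + i%:R * dl) = g2 (x + i%:R * dl)) ->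
  fd N g1 dl x = fd N g2 dl x.
Proof.
elim: N x => [|N IH] x H /=.
  by have := H 0%N (leqnn 0); rewrite mul0r addr0.
rewrite (IH x) ?(IH (x + dl)) //.
  move=> i iN; have := H i.+1 iN.
  by rewrite node_shift.
by move=> i iN; apply: H; apply: leqW.
Qed.

Lemma fd_shift (V : zmodType) N (g : R -> V) dl x :
  fd N g dl (x + dl) = fd N (fun y => g (y + dl)) dl x.
Proof.
elim: N x => [|N IH] x //=.
by rewrite !IH.
Qed.

Lemma fd_sub (V : zmodType) N (g1 g2 : R -> V) dl x :
  fd N (fun y => g1 y - g2 y) dl x = fd N g1 dl x - fd N g2 dl x.
Proof.
elim: N x => [|N IH] x //=.
by rewrite !IH !opprD addrACA !opprK.
Qed.

Lemma fd_add (V : zmodType) N (g1 g2 : R -> V) dl x :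
  fd N (fun y => g1 y + g2 y) dl x = fd N g1 dl x + fd N g2 dl x.
Proof.
elim: N x => [|N IH] x //=.
by rewrite !IH opprD addrACA.
Qed.

Lemma fd_scale (V : lmodType R) N (a : R) (g : R -> V) dl x :
  fd N (fun y => a *: g y) dl x = a *: fd N g dl x.
Proof.
elim: N x => [|N IH] x //=.
by rewrite !IH scalerBr.
Qed.

Lemma fd_scalev (V : lmodType R) N (c : R -> R) (v : V) dl x :
  fd N (fun y => c y *: v) dl x = fd N c dl x *: v.
Proof.
elim: N x => [|N IH] x //=.
by rewrite !IH scalerBl.
Qed.

Lemma fd_sum (V : zmodType) N m (G : 'I_m -> R -> V) dl x :
  fd N (fun y => \sum_(i < m) G i y) dl x = \sum_(i < m) fd N (G i) dl x.
Proof.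
elim: N x => [|N IH] x //=.
by rewrite !IH sumrB.
Qed.

Lemma size_shift_sub (q : {poly R}) (c : R) N :
  (size q <= N.+1)%N -> (size (q \Po ('X + c%:P) - q)%R <= N)%N.
Proof.
move=> sq; apply/leq_sizeP => j Nj.
have s2 : size ('X + c%:P) = 2%N by rewrite size_XaddC.
have sc : size (q \Po ('X + c%:P)) = size q by rewrite size_comp_poly2.
rewrite coefB.
have [Nltj|jltN|NE] := ltngtP N j.
- by rewrite !nth_default ?subrr // ?sc; apply: leq_trans sq _.
- by move: Nj; rewrite leqNgt jltN.
subst j.
have [sqlt|sqE] : (size q < N.+1)%N \/ size q = N.+1.
  by move: sq; rewrite leq_eqVlt => /orP[/eqP->|->]; [right|left].
  by rewrite !nth_default ?subrr // ?sc.
have s2' : (1 < size ('X + c%:P : {poly R})%R)%N by rewrite s2.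
have := lead_coef_comp q s2'.
rewrite lead_coefXaddC expr1n mulr1 /lead_coef sc sqE /= => ->.
by rewrite subrr.
Qed.

Lemma fd_horner N (q : {poly R}) dl x :
  (size q <= N)%N -> fd N (horner q) dl x = 0.
Proof.
elim: N q x => [|N IH] q x sq /=.
  by move: sq; rewrite leqn0 size_poly_eq0 => /eqP ->; rewrite horner0.
rewrite fd_shift -fd_sub.
rewrite -(IH (q \Po ('X + dl%:P) - q) x); last exact: size_shift_sub.
apply: fd_ext => i _.
by rewrite hornerD hornerN horner_comp !hornerE.
Qed.

Lemma fd_bound (V : normedModType R) N (g : R -> V) dl x B :
  (forall i, (i <= N)%N -> `|g (x + i%:R * dl)| <= B) ->
  `|fd N g dl x| <= 2 ^+ N * B.
Proof.
elim: N x => [|N IH] x H /=.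
  by have := H 0%N (leqnn 0); rewrite mul0r addr0 expr0 mul1r.
rewrite exprS -mulrA mulr2n mulrDl mul1r.
apply: le_trans (ler_normB _ _) _.
apply: lerD.
  apply: IH => i iN; have := H i.+1 iN.
  by rewrite node_shift.
by apply: IH => i iN; apply: H; apply: leqW.
Qed.

Lemma fd_bound_last (V : normedModType R) N (g : R -> V) dl x B : 0 <= B ->
  (forall i, (i < N)%N -> `|g (x + i%:R * dl)| <= B) ->
  `|fd N g dl x - g (x + N%:R * dl)| <= 2 ^+ N * B.
Proof.
move=> B0; elim: N x => [|N IH] x H /=.
  by rewrite mul0r addr0 subrr normr0 expr0 mul1r.
rewrite exprS -mulrA mulr2n mulrDl mul1r.
have -> : fd N g dl (x + dl) - fd N g dl x - g (x + N.+1%:R * dl) =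
   (fd N g dl (x + dl) - g (x + dl + N%:R * dl)) - fd N g dl x.
  by rewrite node_shift addrAC.
apply: le_trans (ler_normB _ _) _.
apply: lerD.
  apply: IH => i iN; have := H i.+1 iN.
  by rewrite node_shift.
by apply: fd_bound => i iN; apply: H.
Qed.


Lemma fd_const (V : zmodType) N (v : V) dl x :
  fd N.+1 (fun _ => v) dl x = 0.
Proof.
elim: N x => [|N IH] x; first by rewrite /= subrr.
change (fd N.+1 (fun _ => v) dl (x + dl) - fd N.+1 (fun _ => v) dl x = 0).
by rewrite !IH subrr.
Qed.

Lemma fd_affine N (q : {poly R}) (t hn dl x : R) :
  (0 < N)%N -> (size q <= N)%N -> fd N (fun y => q.[(y - t) / hn]) dl x = 0.
Proof.
move=> N0 sq.
have -> : (fun y => q.[(y - t) / hn]) = horner (q \Po (hn^-1 *: ('X - t%:P))).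
  by apply/funext => y; rewrite horner_comp !hornerE mulrC.
apply: fd_horner.
apply: leq_trans (size_comp_poly_leq _ _) _.
have s2 : (size (hn^-1 *: ('X - t%:P)) <= 2)%N.
  by apply: leq_trans (size_scale_leq _ _) _; rewrite size_XsubC.
case: (size q) sq => [|sz] sq //=.
rewrite -[X in (_ <= X)%N](prednK N0) ltnS.
apply: leq_trans (leq_mul (leqnn sz) (_ : ((size _).-1 <= 1)%N)) _.
  by move: s2; case: (size _) => [|[|[|]]].
by rewrite muln1 -ltnS prednK.
Qed.

Lemma fd_mon N i (c dl x : R) : (i < N)%N ->
  fd N (fun y => (y - c) ^+ i / i`!%:R) dl x = 0.
Proof.
move=> iN.
have -> : (fun y => (y - c) ^+ i / i`!%:R) = (fun y => ((i`!%:R^-1) *: 'X^i : {poly R}).[(y - c) / 1]).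
  by apply/funext => y; rewrite hornerZ hornerXn divr1 mulrC.
apply: fd_affine; first by apply: leq_ltn_trans iN.
by apply: leq_trans (size_scale_leq _ _) _; rewrite size_polyXn.
Qed.

Lemma root_bound (d K h : R) (k p : nat) : 0 <= d -> 0 < h ->
  d ^+ k.+1 <= K * h ^+ p ->
  d <= K `^ (k.+1%:R^-1) * h `^ (p%:R / k.+1%:R).
Proof.
move=> d0 h0 H.
have hp : 0 < h ^+ p by apply: exprn_gt0.
have K0 : 0 <= K.
  have : 0 <= K * h ^+ p by apply: le_trans H; apply: exprn_ge0.
  by rewrite pmulr_lge0.
have kn0 : (k.+1%:R : R) != 0 by rewrite pnatr_eq0.
have -> : d = (d ^+ k.+1) `^ (k.+1%:R^-1).
  by rewrite -powR_mulrn // -powRrM mulfV // powRr1.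
have -> : h `^ (p%:R / k.+1%:R) = (h ^+ p) `^ (k.+1%:R^-1).
  by rewrite -powR_mulrn ?ltW // -powRrM.
rewrite -(powRM _ K0 (ltW hp)).
apply: ge0_ler_powR => //; rewrite ?nnegrE ?invr_ge0 ?ler0n ?exprn_ge0 ?mulr_ge0 // ltW //.
Qed.

Lemma tri_lemma (V : normedModType R) (x w : V) : `|w| <= `|x| + `|x - w|.
Proof.
have E : w = x - (x - w) by rewrite opprB addrC subrK.
rewrite {1}E; exact: ler_normB.
Qed.

Lemma tri2_lemma (V : normedModType R) (x y w : V) : `|x - w| <= `|x - y| + `|y - w|.
Proof.
have -> : x - w = (x - y) + (y - w) by rewrite addrA subrK.
exact: ler_normD.
Qed.

Lemma key_ineq (x1 x2 x3 x4 y1 y2 y3 cd : R) : 2 * cd <= x1 + x2 -> x2 <= x3 + x4 ->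
  x3 <= y1 -> x4 <= y2 -> y2 <= y3 -> cd = y3 + y1 -> cd <= x1.
Proof. move=> *; lra. Qed.

End A.

Theorem theorem4 (R : realType) (d : nat)
  (f : R -> 'rV[R]_d -> 'rV[R]_d -> 'rV[R]_d) (tau : R -> 'rV[R]_d -> R)
  (taumax : R) (phi : R -> 'rV[R]_d) (t0 T : R) (u : R -> 'rV[R]_d)
  (xi : R) (k : nat) (s : nat) (M : fcrk R s) (mesh : R -> nat -> R) (h0 : R)
  (p : nat) :
  smooth (fun z : R * 'rV[R]_d * 'rV[R]_d => f z.1.1 z.1.2 z.2) ->
  (forall t v, 0 <= tau t v <= taumax) ->
  dde_solution f tau taumax phi t0 T u ->
  t0 < xi < T ->
  breaking_point u xi k ->
  mesh_family mesh t0 T h0 ->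
  (k < p)%N ->
  has_global_order M f tau phi t0 T mesh u p ->
  exists C h1 : R, 0 < h1 /\ forall h, 0 < h <= h1 ->
    forall n, (forall m, `|mesh h n - xi| <= `|mesh h m - xi|) ->
      `|mesh h n - xi| <= C * h `^ (p%:R / k.+1%:R).
Proof.
move=> _ _ _ /andP[t0xi xiT] Hbp [h0pos Hm] kp [C0 [h1 [h1pos Hord]]].
case: Hbp => d0 [d0pos [Hder [[L HL] [HderK [Jm [Jp [JmJp [HJm HJp]]]]]]]].
pose F j := derive1n j u.
pose N := maxn k.+2 (\max_(i < s) size (rk_b M i)).
have N0 : (0 < N)%N by rewrite leq_max ltn0Sn.
have kN : (k.+1 < N)%N by rewrite leq_max leqnn.
pose nJ := `|Jp - Jm|.
have nJ0 : 0 < nJ by rewrite normr_gt0 subr_eq0 eq_sym.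
pose c := nJ / (2 ^+ k.+2 * (k.+1)`!%:R).
pose eps := c / (1 + 2 ^+ N * N%:R ^+ k.+1).
have fact0' : (0 : R) < (k.+1)`!%:R by rewrite ltr0n fact_gt0.
have c0 : 0 < c by rewrite divr_gt0 // mulr_gt0 // exprn_gt0.
have den0 : (0 : R) < 1 + 2 ^+ N * N%:R ^+ k.+1.
  by rewrite ltr_pwDl // mulr_ge0 // exprn_ge0 // ler0n.
have eps0 : 0 < eps by rewrite divr_gt0.
have [ep ep0 Hep] : exists2 e : R, 0 < e & forall t, xi < t < xi + e -> `|F k.+1 t - Jp| <= eps.
  have := (cvgrPdist_le _ _).1 HJp eps eps0.
  case=> r /= r0 Hr.
  exists r => // t /andP[xt tx].
  rewrite distrC; apply: Hr => //=.
  rewrite ler0_norm ?subr_le0 ?ltW // opprB; lra.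
have [em em0 Hem] : exists2 e : R, 0 < e & forall t, xi - e < t < xi -> `|F k.+1 t - Jm| <= eps.
  have := (cvgrPdist_le _ _).1 HJm eps eps0.
  case=> r /= r0 Hr.
  exists r => // t /andP[xt tx].
  rewrite distrC; apply: Hr => //=.
  rewrite ger0_norm ?subr_ge0 ?ltW //; lra.
have HdF j t : (j < k.+1)%N -> `|t - xi| < d0 -> t != xi ->
    is_derive t (1:R) (F j) (F j.+1 t).
  move=> jk tx txi.
  have dv : derivable (F j) t 1.
    move: jk; rewrite ltnS leq_eqVlt => /orP[/eqP->|jk].
      exact: HderK.
    exact: Hder.
  have := derivableP dv.
  by rewrite /F derive1nS derive1E.
have cF j t : (j < k.+1)%N -> `|t - xi| < d0 -> {for t, continuous (F j)}.
  move=> jk tx.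
  move: jk; rewrite ltnS leq_eqVlt => /orP[/eqP->|jk]; last first.
    apply: differentiable_continuous; apply/derivable1_diffP.
    exact: Hder.
  apply/cvgrPdist_le => e e0.
  have L1 : 0 < `|L| + 1 by rewrite ltr_pwDr // ?normr_ge0.
  pose r := Num.min (d0 - `|t - xi|) (e / (`|L| + 1)).
  have r0 : 0 < r by rewrite /r lt_min subr_gt0 tx divr_gt0.
  apply/nbhs_ballP; exists r => // y /= ty.
  rewrite /ball /= in ty.
  have hy : `|y - xi| < d0.
    have : `|y - xi| <= `|t - y| + `|t - xi|.
      by rewrite -(subrKA t) (le_trans (ler_normD _ _)) // distrC.
    move=> h; apply: le_lt_trans h _.
    have : `|t - y| < d0 - `|t - xi| by apply: lt_le_trans ty _; rewrite /r ge_min lexx.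
    lra.
  apply: le_trans (HL t y tx hy) _.
  apply: le_trans (ler_wpM2r (normr_ge0 _) (ler_norm L)) _.
  have ty' : `|t - y| <= e / (`|L| + 1).
    by apply: ltW; apply: lt_le_trans ty _; rewrite /r ge_min lexx orbT.
  apply: le_trans (ler_wpM2l (normr_ge0 _) ty') _.
  rewrite mulrA ler_pdivrMr // mulrDr mulr1 mulrC lerDl ltW //.
pose rho := Num.min (d0 / 2) (Num.min ep em).
have rho0 : 0 < rho by rewrite /rho !lt_min ep0 em0 divr_gt0.
have rhod0 : rho < d0.
  by rewrite /rho gt_min; apply/orP; left; lra.
have rhoep : rho <= ep by rewrite /rho !ge_min lexx orbT.
have rhoem : rho <= em by rewrite /rho !ge_min lexx !orbT.
have cW a b j : xi - rho <= a -> b <= xi + rho -> (j < k.+1)%N ->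
    {within `[a, b], continuous (F j)}.
  move=> xa bx jk; apply: continuous_in_subspaceT => t.
  rewrite inE /= in_itv /= => /andP[a_t tb].
  apply: cF => //.
  have : `|t - xi| <= rho.
    rewrite ler_norml; apply/andP; split; lra.
  move=> h; apply: le_lt_trans h rhod0.
have TR : forall x, xi < x < xi + rho ->
   `|F 0%N x - tay xi F k.+1 x - ((x - xi) ^+ k.+1 / (k.+1)`!%:R) *: Jp| <=
   eps * `|x - xi| ^+ k.+1.
  apply: taylor.
  - by rewrite lerDl ltW.
  - by left.
  - move=> j t jk /andP[xt tx]; apply: HdF => //.
      rewrite gtr0_norm ?subr_gt0 //; lra.
    by rewrite gt_eqF.
  - move=> j jk; apply: cW => //; lra.
  - move=> t /andP[xt tx]; apply: Hep; apply/andP; split => //; lra.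
have TL : forall x, xi - rho < x < xi ->
   `|F 0%N x - tay xi F k.+1 x - ((x - xi) ^+ k.+1 / (k.+1)`!%:R) *: Jm| <=
   eps * `|x - xi| ^+ k.+1.
  apply: taylor.
  - by rewrite lerBlDr lerDl ltW.
  - by right.
  - move=> j t jk /andP[xt tx]; apply: HdF => //.
      rewrite ltr0_norm ?subr_lt0 //; lra.
    by rewrite lt_eqF.
  - move=> j jk; apply: cW => //; lra.
  - move=> t /andP[xt tx]; apply: Hem; apply/andP; split => //; lra.
clearbody rho.
pose h2 := Num.min (Num.min h0 h1) (Num.min rho (T - xi)).
have h20 : 0 < h2.
  by rewrite /h2 !lt_min h0pos h1pos rho0 /= subr_gt0.
pose K := (N.+1%:R) ^+ k.+1 * 2 ^+ N * C0 / c.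
exists (K `^ (k.+1%:R^-1)), h2; split => // h /andP[hpos hh2] n nmin.
have hh0 : h <= h0 by apply: le_trans hh2 _; rewrite /h2 !ge_min lexx.
have hh1 : h <= h1 by apply: le_trans hh2 _; rewrite /h2 !ge_min lexx !orbT.
have hrho : h <= rho by apply: le_trans hh2 _; rewrite /h2 !ge_min lexx !orbT.
have hT : h <= T - xi by apply: le_trans hh2 _; rewrite /h2 !ge_min lexx !orbT.
have [m0 [minc [mstep [NT HNT]]]] := Hm h (introT andP (conj hpos hh0)).
pose dd := `|mesh h n - xi|.
have [dd0|ddn0] := eqVneq dd 0.
  by rewrite /dd in dd0; rewrite dd0 mulr_ge0 // powR_ge0.
have ddpos : 0 < dd by rewrite lt_def ddn0 normr_ge0.
apply: (root_bound (normr_ge0 _) hpos).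
fold dd.
have mge m : t0 <= mesh h m.
  elim: m => [|m IH]; first by rewrite m0.
  exact: le_trans IH (ltW (minc m)).
have ex : exists m, xi < mesh h m by exists NT; apply: lt_le_trans xiT HNT.
case: (ex_minnP ex) => m1 Pm1 minm1.
have m1n0 : m1 != 0%N.
  by apply/eqP => m10; move: Pm1; rewrite m10 m0 ltNge ltW.
pose j := m1.-1.
have m1j : m1 = j.+1 by rewrite /j prednK // lt0n.
rewrite m1j in Pm1.
have tjxi : mesh h j <= xi.
  rewrite leNgt; apply/negP => /minm1; rewrite m1j ltnn //.
have tjxi' : mesh h j < xi.
  rewrite lt_neqAle tjxi andbT; apply/negP => /eqP E.
  have := nmin j; rewrite E subrr normr0 => H; move: ddn0.
  by rewrite /dd eq_le H normr_ge0.
have dd1 : dd <= xi - mesh h j.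
  by have := nmin j; rewrite [X in _ <= X]ler0_norm ?opprB // subr_le0.
have dd2 : dd <= mesh h j.+1 - xi.
  by have := nmin j.+1; rewrite [X in _ <= X]ger0_norm // subr_ge0 ltW.
have step := mstep j.
have ddh : dd <= h by lra.
pose dl := dd / N.+1%:R.
have N1pos : (0 : R) < N.+1%:R by rewrite ltr0n.
have dl0 : 0 < dl by rewrite divr_gt0.
have ddE : dd = N%:R * dl + dl.
  rewrite /dl -[N.+1]addn1 natrD; field. by rewrite natr1 pnatr_eq0.
have N1R : (1 : R) <= N%:R by rewrite ler1n.
have Ndl : dl <= N%:R * dl by rewrite ler_peMl // ltW.
pose a := xi - (N%:R * dl - dl / 2).
pose node (i : nat) := a + i%:R * dl.
have nodeN : node N = xi + dl / 2 by rewrite /node /a; field.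
have nodeB i : (i <= N)%N -> xi - dd < node i < xi + dd.
  move=> iN.
  have iR : i%:R * dl <= N%:R * dl by apply: ler_wpM2r; [exact: ltW | rewrite ler_nat].
  have iR0 : 0 <= i%:R * dl by apply: mulr_ge0; [rewrite ler0n | exact: ltW].
  rewrite /node /a; apply/andP; split; lra.
have nodeL i : (i < N)%N -> node i < xi /\ `|node i - xi| <= N%:R * dl.
  move=> iN.
  have iR : i%:R * dl + dl <= N%:R * dl.
    by rewrite -{2}(mul1r dl) -mulrDl; apply: ler_wpM2r; [exact: ltW | rewrite natr1 ler_nat].
  have iR0 : 0 <= i%:R * dl by apply: mulr_ge0; [rewrite ler0n | exact: ltW].
  have nl : node i < xi by rewrite /node /a; lra.
  split => //; rewrite ltr0_norm ?subr_lt0 // opprB /node /a; lra.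
pose prev := fcrk_sol M f tau phi t0 (mesh h) j.
pose tn := mesh h j.
pose hn := mesh h j.+1 - mesh h j.
pose ks := stages M f tau prev tn hn s.
pose Pnum x := prev tn + hn *: \sum_(i < s) ((rk_b M i).[(x - tn) / hn] *: nth 0 ks i).
have solE x : tn < x -> fcrk_sol M f tau phi t0 (mesh h) j.+1 x = Pnum x.
  by move=> tx; rewrite /= /step_output leNgt tx.
have err i : (i <= N)%N -> `|u (node i) - Pnum (node i)| <= C0 * h ^+ p.
  move=> iN; have /andP[n1 n2] := nodeB i iN.
  rewrite -solE; last by rewrite /tn; lra.
  apply: Hord.
  - by rewrite hpos (le_trans hh2) // /h2 !ge_min lexx !orbT.
  - apply/andP; split; first by have := mge j; lra.
    lra.
  - lra.
have PZ : fd N Pnum dl a = 0.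
  rewrite /Pnum fd_add -(prednK N0) fd_const add0r prednK // fd_scale fd_sum.
  rewrite big1 ?scaler0 // => i _.
  rewrite fd_scalev fd_affine ?scale0r //.
  apply: leq_trans (leq_maxr k.+2 _); exact: (leq_bigmax_cond i).
pose Q x := tay xi F k.+1 x + ((x - xi) ^+ k.+1 / (k.+1)`!%:R) *: Jm.
have QZ : fd N Q dl a = 0.
  rewrite /Q fd_add /tay fd_sum big1 ?add0r.
    by rewrite fd_scalev fd_mon ?scale0r.
  move=> i _; rewrite fd_scalev fd_mon ?scale0r //.
  exact: ltn_trans (ltn_ord i) kN.
have E1 : fd N u dl a = fd N (fun x => u x - Pnum x) dl a by rewrite fd_sub PZ subr0.
have E2 : fd N u dl a = fd N (fun x => u x - Q x) dl a by rewrite fd_sub QZ subr0.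
have up : `|fd N u dl a| <= 2 ^+ N * (C0 * h ^+ p).
  by rewrite E1; apply: fd_bound => i iN; exact: err.
pose D := dl ^+ k.+1.
have D0 : 0 < D by apply: exprn_gt0.
pose G x := u x - Q x.
have hxi : xi - rho <= xi - dd by lra.
have GL i : (i < N)%N -> `|G (a + i%:R * dl)| <= eps * (N%:R ^+ k.+1 * D).
  move=> iN; have [nl nb] := nodeL i iN.
  have /andP[n1 _] := nodeB i (ltnW iN).
  have : xi - rho < node i < xi by apply/andP; split => //; lra.
  move/TL; rewrite /G /Q opprD addrA => H; apply: le_trans H _.
  apply: ler_wpM2l; first exact: ltW.
  rewrite /D -exprMn; apply: lerXn2r => //; rewrite ?nnegrE //.
  by apply: mulr_ge0; [rewrite ler0n | exact: ltW].
have A := @fd_bound_last _ _ N G dl a (eps * (N%:R ^+ k.+1 * D))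
  (mulr_ge0 (ltW eps0) (mulr_ge0 (exprn_ge0 _ (ler0n _ _)) (ltW D0))) GL.
pose w := ((dl / 2) ^+ k.+1 / (k.+1)`!%:R) *: (Jp - Jm).
have B : `|G (a + N%:R * dl) - w| <= eps * (D / 2 ^+ k.+1).
  have e : a + N%:R * dl = xi + dl / 2 by exact: nodeN.
  rewrite e.
  have : xi < xi + dl / 2 < xi + rho by apply/andP; split; lra.
  move/TR.
  have -> : G (xi + dl / 2) - w = F 0%N (xi + dl / 2) - tay xi F k.+1 (xi + dl / 2)
     - ((xi + dl / 2 - xi) ^+ k.+1 / (k.+1)`!%:R) *: Jp.
    rewrite /G /Q /w (addrC xi (dl / 2)) addrK scalerBr.
    by rewrite opprD addrA opprB addrA subrK.
  move=> H; apply: le_trans H _.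
  rewrite (addrC xi (dl / 2)) addrK ger0_norm; last by apply: divr_ge0; [exact: ltW|].
  by rewrite expr_div_n.
have Wn : `|w| = 2 * c * D.
  rewrite normrZ ger0_norm; last first.
    by apply: divr_ge0; [apply: exprn_ge0; apply: divr_ge0; [exact: ltW|] | exact: ltW].
  rewrite /c /D expr_div_n (exprS (2:R) k.+1) -/nJ.
  field.
  by rewrite gt_eqF // expf_neq0 // pnatr_eq0.
have low : c * D <= `|fd N u dl a|.
  rewrite E2 -/G.
  have tri : `|w| <= `|fd N G dl a| + `|fd N G dl a - w|.
    exact: tri_lemma.
  have tri2 : `|fd N G dl a - w| <=
      `|fd N G dl a - G (a + N%:R * dl)| + `|G (a + N%:R * dl) - w|.
    exact: tri2_lemma.
  pose X := 2 ^+ N * N%:R ^+ k.+1 : R.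
  have epsX : eps * (1 + X) = c by rewrite /eps divfK ?gt_eqF.
  have t1 : 2 ^+ N * (eps * (N%:R ^+ k.+1 * D)) = eps * X * D by rewrite /X; ring.
  have t2 : eps * (D / 2 ^+ k.+1) <= eps * D.
    apply: ler_wpM2l; first exact: ltW.
    rewrite ler_pdivrMr ?exprn_gt0 //; apply: ler_peMr; [exact: ltW | by apply: exprn_ege1; rewrite ler1n].
  have cD : c * D = eps * D + eps * X * D by rewrite -epsX; ring.
  rewrite Wn -mulrA in tri; rewrite t1 in A.
  exact: (key_ineq tri tri2 A B t2 cD).
have ddE' : dd = N.+1%:R * dl by rewrite ddE -natr1 mulrDl mul1r.
change (dd ^+ k.+1 <= K * h ^+ p).
rewrite ddE' exprMn -/D /K.
have HD : D <= 2 ^+ N * (C0 * h ^+ p) / c.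
  by rewrite ler_pdivlMr // mulrC; apply: le_trans low up.
apply: le_trans (ler_wpM2l (exprn_ge0 _ (ler0n _ _)) HD) _.
have -> : N.+1%:R ^+ k.+1 * 2 ^+ N * C0 / c * h ^+ p =
   N.+1%:R ^+ k.+1 * (2 ^+ N * (C0 * h ^+ p) / c) by ring.
by [].
Qed.
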